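(* Let $\alpha\in\mathbb{Q}(i)\setminus\mathbb{R}$ with $|\alpha|>1$, with minimal primitive polynomial $P_\alpha(X)=a_2X^2+a_1X+a_0$ ($a_0,a_1,a_2\in\mathbb{Z}$ coprime, $a_2>0$, $P_\alpha(\alpha)=0$), $\mathcal{D}=\{0,\ldots,|a_0|-1\}$ and $\Lambda_\alpha=\mathbb{Z}[\alpha]\cap\alpha^{-1}\mathbb{Z}[\alpha^{-1}]$. For $N\in\Lambda_\alpha$ let $D(N)=\{d\in\mathcal{D}: \alpha N+d\in\Lambda_\alpha\}$. Then for every $N\in\Lambda_\alpha$ there exists $r\in\mathbb{Z}$ such that $D(N)=\mathcal{D}\cap(a_2\mathbb{Z}+r)$. *)

(* Defs.v *)
From HB Require Import structures.
From mathcomp Require Import all_boot all_order all_algebra all_field.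
Set Implicit Arguments. Unset Strict Implicit. Unset Printing Implicit Defensive.
Import Order.TTheory GRing.Theory Num.Theory.
Local Open Scope ring_scope.

Definition inQi (a : algC) : Prop :=
  exists x y : rat, a = ratr x + 'i * ratr y.

Definition inZpow (a z : algC) : Prop :=
  exists p : {poly int}, z = (map_poly (intr : int -> algC) p).[a].

Definition inZinvpow (a z : algC) : Prop :=
  exists p : {poly int}, z = a^-1 * (map_poly (intr : int -> algC) p).[a^-1].

Definition Lambda (a z : algC) : Prop := inZpow a z /\ inZinvpow a z.

(* Main.v *)
Require Import Defs.
From HB Require Import structures.
From mathcomp Require Import all_boot all_order all_algebra all_field.
From mathcomp Require Import ring.
Import Order.TTheory GRing.Theory Num.Theory.
Local Open Scope ring_scope.

Notation mp := (map_poly (intr : int -> algC)).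

Lemma K_imp (g : algC) (a0 a1 a2 : int) (hg : g \isn't Num.real)
  (hcop : gcdz (gcdz a0 a1) a2 = 1) (ha2 : a2 != 0)
  (hP : a0%:~R * g^+2 + a1%:~R * g + a2%:~R = 0) (m : int) (p : {poly int})
  (h : m%:~R = g * (mp p).[g]) : (a2 %| m)%Z.
Proof.
set P : {poly int} := a0%:P * 'X^2 + a1%:P * 'X + a2%:P.
set F : {poly int} := 'X * p - m%:P.
have FP : (mp F).[g] = 0.
  by rewrite /F rmorphB rmorphM /= map_polyX map_polyC /= !hornerE -h subrr.
have PP : (mp P).[g] = 0.
  rewrite /P !rmorphD !rmorphM /= map_polyX !map_polyC !hornerE -hP expr2. by rewrite !mulrA.
have P0 : P`_0 = a2.
  by rewrite /P !coefD !coefCM coefXn coefX coefC /= !mulr0 !add0r.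
have Pn0 : P != 0 by apply: contra ha2 => /eqP PE; rewrite -P0 PE coef0.
have sP : (size P <= 3)%N.
  apply/leq_sizeP => j hj; rewrite /P !coefD !coefCM coefXn coefX coefC.
  by case: j hj => [|[|[|j]]] //= _; rewrite !mulr0 !addr0.
have hdiv := Pdiv.Idomain.divp_eq F P.
set R := F %% P in hdiv.
have sR : (size R <= 2)%N.
  by rewrite -ltnS (leq_trans (Pdiv.Idomain.ltn_modpN0 _ Pn0)).
have RG : (mp R).[g] = 0.
  have := congr1 (fun q => (mp q).[g]) hdiv.
  rewrite /= linearZ /= hornerZ FP mulr0 rmorphD rmorphM /= hornerD hornerM PP mulr0 add0r.
  by move=> <-.
have Rexp : (mp R).[g] = (R`_1)%:~R * g + (R`_0)%:~R.
  rewrite (@horner_coef_wide _ 2); last first.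
    by rewrite size_map_inj_poly //; exact: intr_inj.
  by rewrite !big_ord_recl big_ord0 /= !coef_map /= expr0 expr1 mulr1 addr0 addrC.
have R1 : R`_1 = 0.
  apply/eqP; apply: contraNT hg => R1n0.
  have -> : g = - (R`_0)%:~R / (R`_1)%:~R.
    have E : (R`_1)%:~R * g = - (R`_0)%:~R :> algC.
      by apply/eqP; rewrite -addr_eq0 -Rexp RG.
    rewrite -E mulrAC divff ?mul1r //.
    by rewrite intr_eq0.
  by rewrite rpredM ?rpredN ?rpredV ?Rreal_int ?intr_real.
have R0' : R`_0 = 0.
  by apply/eqP; rewrite -(intr_eq0 algC) -RG Rexp R1 mul0r add0r.
have R0 : R = 0.
  apply/polyP => i; rewrite coef0.
  case: i => [|[|i]] //; rewrite nth_default //.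
  by apply: leq_trans sR _.
have : P %| F by apply/Pdiv.Idomain.modp_eq0P.
case/dvdpP_int => r Fr.
set c := zcontents P.
have cdiv : (c %| 1)%Z.
  rewrite -[X in (_ %| X)%Z]hcop !dvdz_gcd.
  have : P \is a polyOver (dvdz c) by rewrite -dvdz_contents dvdzz.
  move/polyOverP => hc.
  have := hc 0%N; have := hc 1%N; have := hc 2%N.
  rewrite /P !coefD !coefCM !coefXn !coefX !coefC /= !mulr0 !mulr1 ?add0r ?addr0.
  by move=> -> -> ->.
have cc : c * c = 1.
  move: cdiv; rewrite dvdz1; case: (c) => [[|[|n]]|[|n]] //.
have hP0 := congr1 (fun q : {poly int} => q`_0) (zpolyEprim P).
rewrite /= coefZ P0 -/c in hP0.
have hF0 := congr1 (fun q : {poly int} => q`_0) Fr.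
rewrite /= coef0M /F coefB coefXM coefC /= sub0r in hF0.
apply/dvdzP; exists (- (c * r`_0)).
have -> : m = - (- m) by rewrite opprK.
rewrite hF0 hP0 -[X in - X = _]mul1r -cc.
move: ((zprimitive P)`_0) (r`_0) => z0 r0.
ring.
Qed.

Lemma K_rev (g : algC) (a0 a1 a2 : int)
  (hP : a0%:~R * g^+2 + a1%:~R * g + a2%:~R = 0) (m : int) :
  (a2 %| m)%Z -> exists p : {poly int}, m%:~R = g * (mp p).[g].
Proof.
case/dvdzP => k ->.
exists ((-(k*a1))%:P - (k*a0)%:P * 'X).
have ha : a2%:~R = -(a0%:~R * g^+2 + a1%:~R*g) :> algC.
  by apply/eqP; rewrite -addr_eq0 addrC hP.
rewrite intrM ha rmorphB rmorphM /= map_polyX !map_polyC /=.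
rewrite hornerD hornerN hornerM hornerX !hornerC !intrM rmorphN /= intrM.
ring.
Qed.

Lemma qdecomp (g : algC) (q : {poly int}) :
  (mp q).[g] = (q`_0)%:~R + g * (mp (drop_poly 1 q)).[g].
Proof.
rewrite -{1}(poly_take_drop 1 q).
have -> : take_poly 1 q = (q`_0)%:P.
  by apply/polyP => i; rewrite coef_take_poly coefC; case: i.
rewrite rmorphD rmorphM /= map_polyC map_polyX /= !hornerE mulrC.
by [].
Qed.

Theorem mainTheorem6 (alpha : algC) (a0 a1 a2 : int)
  (hQi : inQi alpha) (hnreal : alpha \isn't Num.real) (habs : 1 < `|alpha|)
  (hcop : gcdz (gcdz a0 a1) a2 = 1) (ha2 : 0 < a2)
  (hroot : a2%:~R * alpha ^+ 2 + a1%:~R * alpha + a0%:~R = 0 :> algC)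
  (N : algC) (hN : Lambda alpha N) :
  exists r : int, forall d : nat, (d < `|a0|)%N ->
    (Lambda alpha (alpha * N + d%:R) <-> (a2 %| d%:Z - r)%Z).
Proof.
have an0 : alpha != 0 by apply: contraNneq hnreal => ->; rewrite real0.
set g := alpha^-1.
have hg : g \isn't Num.real by rewrite /g realV.
have hP : a0%:~R * g^+2 + a1%:~R * g + a2%:~R = 0.
  have := congr1 (fun x => x * g ^+ 2) hroot.
  rewrite mul0r => <-.
  rewrite /g; field.
  by [].
have a2n0 : a2 != 0 by rewrite gt_eqF.
case: hN => [[p hp] [q hq]].
exists (- q`_0) => d _.
have aN : alpha * N = (mp q).[g].
  by rewrite hq mulrA divff // mul1r.
have key : forall s : {poly int},
    alpha * N + d%:R = g * (mp s).[g] <->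
    ((q`_0 + d%:Z)%:~R = g * (mp (s - drop_poly 1 q)).[g]).
  move=> s; rewrite aN qdecomp rmorphB /= hornerD hornerN mulrDr mulrN.
  have dE : (d%:Z)%:~R = d%:R :> algC by [].
  rewrite intrD dE.
  have gen : forall x y z w : algC, x + y + z = w <-> x + z = w - y.
    move=> x y z w; split=> [<-|H]; first by rewrite addrAC addrK.
    by rewrite addrAC H subrK.
  exact: gen.
split.
  case=> _ [s hs].
  rewrite opprK addrC; apply: (@K_imp g a0 a1 a2 hg hcop a2n0 hP _ (s - drop_poly 1 q)).
  by rewrite -key.
rewrite opprK addrC => hdiv.
split.
  exists ('X * p + (d%:Z)%:P).
  by rewrite rmorphD rmorphM /= map_polyX map_polyC /= hornerD hornerM hornerX hornerC hp.
have [s hs] := @K_rev g a0 a1 a2 hP _ hdiv.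
exists (s + drop_poly 1 q); apply/key.
by rewrite addrK.
Qed.
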